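(* Let $\mathcal A$ be a biflat Banach algebra and $I$ a closed two-sided ideal of $\mathcal A$ which is left essential. Suppose that $\mathcal A\hat\otimes_\pi\cdot$ respects $I$ into $\mathcal A\hat\otimes_\pi\mathcal A$ isomorphically. Then $H^1(\mathcal A,I^* )=\{0\}$.
   Context: $\mathcal A\hat\otimes_\pi\mathcal A$ is the projective tensor product, a Banach $\mathcal A$-bimodule via $a\cdot(b\otimes c)=ab\otimes c$, $(b\otimes c)\cdot a=b\otimes ca$; $\Delta:\mathcal A\hat\otimes_\pi\mathcal A\to\mathcal A$, $a\otimes b\mapsto ab$. $\mathcal A$ is biflat if $\Delta^*:\mathcal A^*\to(\mathcal A\hat\otimes_\pi\mathcal A)^*$ has a bounded left inverse which is an $\mathcal A$-bimodule homomorphism (duals carry $\langle x,a\cdot f\rangle=\langle x\cdot a,f\rangle$, $\langle x,f\cdot a\rangle=\langle a\cdot x,f\rangle$). $I$ is left essential if the linear span of $\{ai:a\in\mathcal A, i\in I\}$ is dense in $I$. ''$\mathcal A\hat\otimes_\pi\cdot$ respects $I$ into $\mathcal A\hat\otimes_\pi\mathcal A$ isomorphically'' means there exists $\lambda\ge1$ such that $\pi(z;\mathcal A,I)\le\lambda\,\pi(z;\mathcal A,\mathcal A)$ for every $z\in\mathcal A\otimes I$, where $\pi(z;E,F)$ denotes the projective tensor norm of $z$ computed in $E\hat\otimes_\pi F$. $H^1(\mathcal A,I^* )=\{0\}$ means every derivation $D:\mathcal A\to I^*$ (continuous linear, $D(ab)=a\cdot D(b)+D(a)\cdot b$) satisfies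 $D(a)=a\cdot f-f\cdot a$ for some $f\in I^*$. *)

(* Defs.v *)
From mathcomp Require Import all_boot all_algebra.
From mathcomp Require Import all_classical all_reals all_analysis.
From mathcomp Require Export complex.
Import numFieldNormedType.Exports.
Import GRing.Theory Num.Theory.

Set Implicit Arguments.
Unset Strict Implicit.
Unset Printing Implicit Defensive.

Local Open Scope ring_scope.
Local Open Scope classical_set_scope.

Section BanachAlgebraDefs.
Variables (K : numFieldType) (V : normedModType K).

(* Completeness of V is imposed by taking V : completeNormedModType in the
   theorem. *)
Record banach_algebra (mul : V -> V -> V) : Prop := BanachAlgebra {
  ba_mulA : forall a b c, mul a (mul b c) = mul (mul a b) c;
  ba_mulDl : forall a b c, mul (a + b) c = mul a c + mul b c;
  ba_mulDr : forall a b c, mul a (b + c) = mul a b + mul a c;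
  ba_mulZl : forall (k : K) a b, mul (k *: a) b = k *: mul a b;
  ba_mulZr : forall (k : K) a b, mul a (k *: b) = k *: mul a b;
  ba_norm_mul : forall a b, `|mul a b| <= `|a| * `|b| }.

Record closed_ideal (mul : V -> V -> V) (I : set V) : Prop := ClosedIdeal {
  ci_0 : I 0;
  ci_D : forall x y, I x -> I y -> I (x + y);
  ci_Z : forall (k : K) x, I x -> I (k *: x);
  ci_closed : closed I;
  ci_mull : forall a i, I i -> I (mul a i);
  ci_mulr : forall a i, I i -> I (mul i a) }.

Definition span_products (mul : V -> V -> V) (I : set V) : set V :=
  [set x | exists n (k : 'I_n -> K) (a : 'I_n -> V) (i : 'I_n -> V),
     (forall j, I (i j)) /\ x = \sum_(j < n) k j *: mul (a j) (i j)].

Definition left_essential (mul : V -> V -> V) (I : set V) : Prop :=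
  I `<=` closure (span_products mul I).

(* A formal finite sum  \sum_j tleft j (x) tright j. *)
Local Unset Implicit Arguments.
Record tensor := Tensor {
  tsize : nat;
  tleft : 'I_tsize -> V;
  tright : 'I_tsize -> V }.
Local Set Implicit Arguments.

Definition in_tensor (P Q : set V) (t : tensor) : Prop :=
  forall j, P (tleft t j) /\ Q (tright t j).

Definition bilinear_on (Q : set V) (B : V -> V -> K) : Prop :=
  (forall (k : K) x y z, Q z -> B (k *: x + y) z = k * B x z + B y z) /\
  (forall (k : K) x y z, Q y -> Q z -> B x (k *: y + z) = k * B x y + B x z).

Definition teval (B : V -> V -> K) (t : tensor) : K :=
  \sum_(j < tsize t) B (tleft t j) (tright t j).

(* Equality of the two represented tensors in the algebraic tensor product
   V (x) Q, via its universal property: all bilinear forms on V x Q agree. *)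
Definition tensor_eq (Q : set V) (t u : tensor) : Prop :=
  forall B, bilinear_on Q B -> teval B t = teval B u.

Definition tcost (t : tensor) : K :=
  \sum_(j < tsize t) `|tleft t j| * `|tright t j|.

(* "A (x)_pi . respects I into A (x)_pi A isomorphically": there is
   lambda >= 1 with  pi(z; A, I) <= lambda * pi(z; A, A)  for all z in A (x) I,
   where pi(z; A, Q) = inf { tcost u | u in A x Q represents z in A (x) Q }.
   The inequality between infima is written out: for every representation t
   of z in A (x) A and every eps > 0 there is a representation u of z in
   A (x) I of cost <= lambda * cost(t) + eps. *)
Definition respects_iso (I : set V) : Prop :=
  exists lambda : K, 1 <= lambda /\
    forall z, in_tensor setT I z ->
    forall t, in_tensor setT setT t -> tensor_eq setT t z ->
    forall eps : K, 0 < eps ->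
    exists u, [/\ in_tensor setT I u, tensor_eq I u z &
                  tcost u <= lambda * tcost t + eps].

Definition bounded_functional (f : V -> K) : Prop :=
  (forall (k : K) x y, f (k *: x + y) = k * f x + f y) /\
  exists M : K, forall x, `|f x| <= M * `|x|.

(* bounded bilinear forms on V x V: these are the elements of
   (A (x)_pi A)^*  (standard isometric identification); the dual norm is
   the smallest M with |B b c| <= M |b| |c|. *)
Definition bounded_bilinear (B : V -> V -> K) : Prop :=
  bilinear_on setT B /\ exists M : K, forall b c, `|B b c| <= M * `|b| * `|c|.

(* Biflatness: Delta^* : A^* -> (A (x)_pi A)^*, f |-> ((b,c) |-> f (b c)),
   has a bounded left inverse rho which is an A-bimodule homomorphism.
   Module actions: (a.F)(b,c) = F(b, c a), (F.a)(b,c) = F(a b, c),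
   (a.f)(x) = f(x a), (f.a)(x) = f(a x). *)
Definition biflat (mul : V -> V -> V) : Prop :=
  exists rho : (V -> V -> K) -> (V -> K),
    [/\ forall B, bounded_bilinear B -> bounded_functional (rho B),
        forall (k : K) B1 B2, bounded_bilinear B1 -> bounded_bilinear B2 ->
          rho (fun b c => k * B1 b c + B2 b c) = (fun x => k * rho B1 x + rho B2 x),
        exists C : K, forall B (M : K), bounded_bilinear B ->
          (forall b c, `|B b c| <= M * `|b| * `|c|) ->
          forall x, `|rho B x| <= C * M * `|x|,
        forall f, bounded_functional f -> rho (fun b c => f (mul b c)) = f &
        forall a B, bounded_bilinear B ->
          rho (fun b c => B b (mul c a)) = (fun x => rho B (mul x a)) /\
          rho (fun b c => B (mul a b) c) = (fun x => rho B (mul a x))].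

(* An element of I^* is represented by a function V -> K, only its values on
   I matter.  D : A -> I^* is encoded as D a i = <i, D(a)>.
   Module actions on I^*: <i, a.f> = f(i a), <i, f.a> = f(a i). *)
Definition dual_on (I : set V) (f : V -> K) : Prop :=
  (forall (k : K) x y, I x -> I y -> f (k *: x + y) = k * f x + f y) /\
  exists M : K, forall x, I x -> `|f x| <= M * `|x|.

Definition derivation_into_dual (mul : V -> V -> V) (I : set V)
    (D : V -> V -> K) : Prop :=
  [/\ forall a (k : K) x y, I x -> I y -> D a (k *: x + y) = k * D a x + D a y,
      forall (k : K) a b x, I x -> D (k *: a + b) x = k * D a x + D b x,
      exists C : K, forall a x, I x -> `|D a x| <= C * `|a| * `|x| &
      forall a b x, I x -> D (mul a b) x = D b (mul x a) + D a (mul b x)].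

(* H^1(A, I^* ) = {0}: every continuous derivation is inner. *)
Definition H1_dual_trivial (mul : V -> V -> V) (I : set V) : Prop :=
  forall D, derivation_into_dual mul I D ->
    exists f, dual_on I f /\
      forall a x, I x -> D a x = f (mul x a) - f (mul a x).

End BanachAlgebraDefs.

(* Main.v *)
Require Import Defs.
From mathcomp Require Import all_boot all_order all_algebra.
Import Order.TTheory GRing.Theory Num.Theory.
From mathcomp Require Import all_classical all_reals all_analysis.
From mathcomp Require Import complex.
From mathcomp Require Import lra.
Import numFieldNormedType.Exports.
Local Open Scope ring_scope.
Local Open Scope classical_set_scope.
Set Implicit Arguments. Unset Strict Implicit. Unset Printing Implicit Defensive.
Section HahnBanach.
Variables (R : realType) (X : lmodType R) (T : set X) (p : X -> R)
  (G : set (X * R)).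
Hypotheses (TD : forall x y, T x -> T y -> T (x + y))
  (TZ : forall (r : R) x, T x -> T (r *: x))
  (pD : forall x y, T x -> T y -> p (x + y) <= p x + p y)
  (pZ : forall (r : R) x, 0 < r -> T x -> p (r *: x) = r * p x)
  (G0 : G (0, 0))
  (Gfun : forall x y y', G (x, y) -> G (x, y') -> y = y')
  (GD : forall x y x' y', G (x, y) -> G (x', y') -> G (x + x', y + y'))
  (GZ : forall (r : R) x y, G (x, y) -> G (r *: x, r * y))
  (Gp : forall x y, G (x, y) -> T x /\ y <= p x).

Definition good (H : set (X * R)) : Prop :=
  [/\ forall x y y', H (x, y) -> H (x, y') -> y = y',
      forall x y x' y', H (x, y) -> H (x', y') -> H (x + x', y + y'),
      forall (r : R) x y, H (x, y) -> H (r *: x, r * y) &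
      forall x y, H (x, y) -> T x /\ y <= p x].

Let goodG : good G. Proof. by split. Qed.

Let Pgood (A : set (X * R)) := good (A `|` G).

Let two_points (F : set (set (X * R))) : F `<=` Pgood -> total_on F subset ->
  forall a b, ((\bigcup_(Y in F) Y) `|` G) a -> ((\bigcup_(Y in F) Y) `|` G) b ->
  exists H, [/\ good H, H a, H b & H `<=` (\bigcup_(Y in F) Y) `|` G].
Proof.
move=> FP Ftot a b [[Y1 FY1 Y1a]|Ga] [[Y2 FY2 Y2b]|Gb].
- have [s12|s21] := Ftot _ _ FY1 FY2.
  + exists (Y2 `|` G); split; [exact: FP|by left; apply: s12|by left|].
    by move=> z [Y2z|Gz]; [left; exists Y2|right].
  + exists (Y1 `|` G); split; [exact: FP|by left|by left; apply: s21|].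
    by move=> z [Y1z|Gz]; [left; exists Y1|right].
- exists (Y1 `|` G); split; [exact: FP|by left|by right|].
  by move=> z [Y1z|Gz]; [left; exists Y1|right].
- exists (Y2 `|` G); split; [exact: FP|by right|by left|].
  by move=> z [Y2z|Gz]; [left; exists Y2|right].
- by exists G; split => // z Gz; right.
Qed.

Let chain_good (F : set (set (X * R))) : F `<=` Pgood -> total_on F subset ->
  Pgood (\bigcup_(Y in F) Y).
Proof.
move=> FP Ftot; have tp := @two_points F FP Ftot; split.
- move=> x y y' h1 h2; have [H [[Hf _ _ _] Ha Hb _]] := tp _ _ h1 h2.
  exact: Hf Ha Hb.
- move=> x y x' y' h1 h2; have [H [[_ HD _ _] Ha Hb HU]] := tp _ _ h1 h2.
  exact/HU/HD.
- move=> r x y h1; have [H [[_ _ HZ _] Ha _ HU]] := tp _ _ h1 h1.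
  exact/HU/HZ.
- move=> x y h1; have [H [[_ _ _ Hp] Ha _ _]] := tp _ _ h1 h1.
  exact: Hp.
Qed.

Let extend (H : set (X * R)) x0 : good H -> G `<=` H -> T x0 ->
  ~ (exists y, H (x0, y)) ->
  exists B c, [/\ good B, H `<=` B & B (x0, c)].
Proof.
move=> [Hf HD HZ Hp] GH Tx0 nx0.
have H0 : H (0, 0) by apply: GH.
have HN : forall n y, H (n, y) -> H (- n, - y).
  by move=> n y /(HZ (-1)); rewrite scaleN1r mulN1r.
have TN : forall x, T x -> T (- x) by move=> x /(TZ (-1)); rewrite scaleN1r.
set S := [set z | exists n y, H (n, y) /\ z = y - p (n - x0)].
have ubS : forall m h, H (m, h) -> ubound S (p (m + x0) - h).
  move=> m h Hmh _ [n [y [Hny ->]]].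
  have Hs := HD _ _ _ _ Hny Hmh.
  have [Tnm le1] := Hp _ _ Hs.
  have [Tn _] := Hp _ _ Hny; have [Tm _] := Hp _ _ Hmh.
  have : p (n + m) <= p (n - x0) + p (m + x0).
    have -> : n + m = (n - x0) + (m + x0) by rewrite addrACA addNr addr0.
    by apply: pD; [apply: TD => //; apply: TN|apply: TD].
  move=> le2; have := le_trans le1 le2; lra.
have S0 : S !=set0 by exists (0 - p (0 - x0)), 0, 0.
have hS : has_sup S by split => //; exists (p (0 + x0) - 0); apply: ubS.
set c := sup S.
have hc1 : forall n y, H (n, y) -> y - p (n - x0) <= c.
  by move=> n y Hny; apply: sup_upper_bound => //; exists n, y.
have hc2 : forall m h, H (m, h) -> c <= p (m + x0) - h.
  by move=> m h Hmh; apply: ge_sup => //; apply: ubS.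
set B := [set z | exists n y (r : R), H (n, y) /\ z = (n + r *: x0, y + r * c)].
have HB : H `<=` B.
  by move=> [n y] Hny; exists n, y, 0; rewrite scale0r mul0r !addr0.
exists B, c; split => //; last first.
  by exists 0, 0, 1; rewrite scale1r mul1r !add0r.
split.
- move=> x y y' [n [z [r [Hn [-> ->]]]]] [n' [z' [r' [Hn' [e ->]]]]].
  have [rr|rr] := eqVneq r r'.
    subst r'; move: e; move/addIr => e; subst n'.
    by rewrite (Hf _ _ _ Hn Hn').
  exfalso; apply: nx0.
  have e2 : (r - r') *: x0 = n' - n.
    have e3 : (n + r *: x0) - (n + r' *: x0) = n' - n.
      by rewrite e opprD addrACA subrr addr0.
    by rewrite -e3 opprD addrACA subrr add0r scalerBl.
  have Hd := HD _ _ _ _ Hn' (HN _ _ Hn).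
  have := HZ (r - r')^-1 _ _ Hd; rewrite -e2 scalerA mulVf ?scale1r ?subr_eq0 //.
  by move=> h; eexists; exact: h.
- move=> x y x' y' [n [z [r [Hn [-> ->]]]]] [n' [z' [r' [Hn' [-> ->]]]]].
  exists (n + n'), (z + z'), (r + r'); split; first exact: HD.
  by rewrite scalerDl mulrDl !addrA (addrAC n) (addrAC z).
- move=> s x y [n [z [r [Hn [-> ->]]]]].
  exists (s *: n), (s * z), (s * r); split; first exact: HZ.
  by rewrite scalerDr mulrDr scalerA mulrA.
- move=> x y [n [z [r [Hn [-> ->]]]]].
  have [Tn lez] := Hp _ _ Hn.
  split; first by apply: TD => //; apply: TZ.
  have [r0|r0|->] := ltgtP r 0; last by rewrite scale0r mul0r !addr0.
  + set s := - r.
    have s0 : 0 < s by rewrite oppr_gt0.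
    have Hs := HZ s^-1 _ _ Hn.
    have := hc1 _ _ Hs.
    have Ts : T (s^-1 *: n - x0) by apply: TD; [apply: TZ|apply: TN].
    have -> : n + r *: x0 = s *: (s^-1 *: n - x0).
      by rewrite scalerDr scalerA mulfV ?gt_eqF // scale1r scalerN scaleNr opprK.
    rewrite pZ //.
    move=> h; have h2 : s * (s^-1 * z - p (s^-1 *: n - x0)) <= s * c.
      by rewrite ler_pM2l.
    move: h2; rewrite mulrBr mulrA mulfV ?gt_eqF // mul1r => h2.
    rewrite -[r]opprK -/s mulNr; lra.
  + have Hs := HZ r^-1 _ _ Hn.
    have := hc2 _ _ Hs.
    have Ts : T (r^-1 *: n + x0) by apply: TD => //; apply: TZ.
    have -> : n + r *: x0 = r *: (r^-1 *: n + x0).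
      by rewrite scalerDr scalerA mulfV ?gt_eqF // scale1r.
    rewrite pZ //.
    move=> h; have h2 : r * c <= r * (p (r^-1 *: n + x0) - r^-1 * z).
      by rewrite ler_pM2l.
    move: h2; rewrite mulrBr mulrA mulfV ?gt_eqF // mul1r => h2.
    lra.
Qed.

Lemma hahn_banach_real : exists U : X -> R,
  [/\ forall x y, T x -> T y -> U (x + y) = U x + U y,
      forall (r : R) x, T x -> U (r *: x) = r * U x,
      forall x, T x -> U x <= p x &
      forall x y, G (x, y) -> U x = y].
Proof.
have [A [PA Amax]] := @Zorn_bigcup _ Pgood chain_good.
set H := A `|` G.
have tot : forall x, T x -> exists y, H (x, y).
  move=> x Tx; case: (pselect (exists y, H (x, y))) => // nx; exfalso.
  have [B [c [gB HB Bx]]] := @extend H x PA (fun z Gz => or_intror Gz) Tx nx.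
  apply: (Amax B).
    split; first by move=> z Az; apply: HB; left.
    move=> BA; apply: nx; exists c; left; exact: BA _ Bx.
  by rewrite /Pgood setUidl // => z Gz; apply: HB; right.
have [Hf HD HZ Hp] := PA.
pose U x := xget 0 [set y | H (x, y)].
have HU : forall x, T x -> H (x, U x).
  by move=> x Tx; apply: (xgetPex 0 (tot x Tx)).
exists U; split.
- move=> x y Tx Ty; apply: (Hf (x + y)); first exact: (HU _ (TD Tx Ty)).
  exact: HD _ _ _ _ (HU _ Tx) (HU _ Ty).
- move=> r x Tx; apply: (Hf (r *: x)); first exact: (HU _ (TZ r Tx)).
  exact: HZ _ _ _ (HU _ Tx).
- by move=> x Tx; have [] := Hp _ _ (HU _ Tx).
- move=> x y Gxy; have [Tx _] := Gp Gxy.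
  by apply: (Hf x); [apply: HU|right].
Qed.
End HahnBanach.
Section Tensors.
Variable R : realType.
Local Notation C := R[i].
Variable V : normedModType C.
Local Notation tens := (tensor C V).
Local Notation tsz t := (Defs.tsize _ _ t).
Local Notation tl t := (Defs.tleft _ _ t).
Local Notation tr t := (Defs.tright _ _ t).

Definition tcat (t s : tens) : tens :=
  Tensor C V (tsz t + tsz s)
    (fun j => match fintype.split j with inl a => tl t a | inr b => tl s b end)
    (fun j => match fintype.split j with inl a => tr t a | inr b => tr s b end).

Definition tscale (k : C) (t : tens) : tens :=
  Tensor C V (tsz t) (fun j => k *: tl t j) (tr t).

Definition tsingle (b c : V) : tens := Tensor C V 1 (fun _ => b) (fun _ => c).

Definition tempty : tens := Tensor C V 0 (fun _ => 0) (fun _ => 0).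

Lemma teval_cat B t s : teval B (tcat t s) = teval B t + teval B s.
Proof.
rewrite /teval /= big_split_ord /=; congr (_ + _); apply: eq_bigr => j _.
  by rewrite (unsplitK (inl _ j)).
by rewrite (unsplitK (inr _ j)).
Qed.

Lemma tcost_cat t s : tcost (tcat t s) = tcost t + tcost s.
Proof.
rewrite /tcost /= big_split_ord /=; congr (_ + _); apply: eq_bigr => j _.
  by rewrite (unsplitK (inl _ j)).
by rewrite (unsplitK (inr _ j)).
Qed.

Lemma in_tensor_cat P Q t s : in_tensor P Q t -> in_tensor P Q s ->
  in_tensor P Q (tcat t s).
Proof. by move=> ht hs j /=; case: (fintype.split j) => a; [apply: ht|apply: hs]. Qed.

Lemma left_lin0 (Q : set V) (B : V -> V -> C) :
  (forall (k : C) x y z, Q z -> B (k *: x + y) z = k * B x z + B y z) ->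
  forall z, Q z -> B 0 z = 0.
Proof.
move=> hB z Qz; have := hB 1 0 0 z Qz; rewrite scale1r addr0 mul1r.
by move=> h; apply: (addrI (B 0 z)); rewrite addr0 -h.
Qed.

Lemma teval_scale (Q : set V) (B : V -> V -> C) k t :
  (forall (k : C) x y z, Q z -> B (k *: x + y) z = k * B x z + B y z) ->
  (forall j, Q (tr t j)) ->
  teval B (tscale k t) = k * teval B t.
Proof.
move=> hB ht; rewrite /teval /= mulr_sumr; apply: eq_bigr => j _.
by have := hB k (tl t j) 0 _ (ht j); rewrite addr0 (left_lin0 hB (ht j)) addr0.
Qed.

Lemma tcost_scale k t : tcost (tscale k t) = `|k| * tcost t.
Proof.
by rewrite /tcost /= mulr_sumr; apply: eq_bigr => j _; rewrite normrZ mulrA.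
Qed.

Lemma teval_single B b c : teval B (tsingle b c) = B b c.
Proof. by rewrite /teval big_ord1. Qed.

Lemma tcost_single b c : tcost (tsingle b c) = `|b| * `|c|.
Proof. by rewrite /tcost big_ord1. Qed.

Lemma teval_empty B : teval B tempty = 0.
Proof. by rewrite /teval big_ord0. Qed.

Lemma tcost_empty : tcost (tempty : tens) = 0.
Proof. by rewrite /tcost big_ord0. Qed.

Lemma tcost_ge0 (t : tens) : 0 <= tcost t.
Proof. by apply: sumr_ge0 => j _; apply: mulr_ge0. Qed.

End Tensors.
Section Cplx.
Variable R : realType.
Local Notation C := R[i].
Local Open Scope complex_scope.

Lemma ReD (x y : C) : Re (x + y) = Re x + Re y. Proof. by case: x; case: y. Qed.
Lemma ImD (x y : C) : Im (x + y) = Im x + Im y. Proof. by case: x; case: y. Qed.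
Lemma ReN (x : C) : Re (- x) = - Re x. Proof. by case: x. Qed.
Lemma ImN (x : C) : Im (- x) = - Im x. Proof. by case: x. Qed.
Lemma ReMc (x y : C) : Re (x * y) = Re x * Re y - Im x * Im y.
Proof. by case: x; case: y. Qed.
Lemma ImMc (x y : C) : Im (x * y) = Re x * Im y + Im x * Re y.
Proof. by case: x => a b; case: y => c d /=; rewrite addrC. Qed.
Lemma Re0 : Re (0 : C) = 0. Proof. by []. Qed.
Lemma Im0 : Im (0 : C) = 0. Proof. by []. Qed.
Lemma Rer (r : R) : Re (r%:C) = r. Proof. by []. Qed.
Lemma Imr (r : R) : Im (r%:C) = 0. Proof. by []. Qed.
Lemma Rei : Re ('i : C) = 0. Proof. by []. Qed.
Lemma Imi : Im ('i : C) = 1. Proof. by []. Qed.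
Lemma Re1 : Re (1 : C) = 1. Proof. by []. Qed.
Lemma Im1 : Im (1 : C) = 0. Proof. by []. Qed.

Lemma cext (x y : C) : Re x = Re y -> Im x = Im y -> x = y.
Proof. by case: x; case: y => a b c d /= -> ->. Qed.

Lemma ReIm_eta (x : C) : (Re x +i* Im x) = x. Proof. by case: x. Qed.

Lemma leC_Re (x y : C) : x <= y -> Re x <= Re y.
Proof. by rewrite lecE => /andP[]. Qed.

Lemma ge0_real (x : C) : 0 <= x -> x = (Re x)%:C.
Proof. by rewrite lecE => /andP[/eqP h _]; apply: cext => //=. Qed.

Lemma Re_le_norm (x : C) : Re x <= Re `|x|.
Proof.
have := leC_Re (normc_ge_Re x); rewrite Rer => h.
exact: le_trans (ler_norm _) h.
Qed.

Lemma Re_norm_ge0 (x : C) : 0 <= Re `|x|.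
Proof. by have := leC_Re (normr_ge0 x). Qed.

Lemma norm_real (x : C) : `|x| = (Re `|x|)%:C.
Proof. exact: ge0_real. Qed.

Lemma rcM (a b : R) : (a * b)%:C = a%:C * b%:C :> C.
Proof. by rewrite rmorphM. Qed.
Lemma rcD (a b : R) : (a + b)%:C = a%:C + b%:C :> C.
Proof. by rewrite rmorphD. Qed.

Lemma Re_rmul (r : R) (x : C) : Re (r%:C * x) = r * Re x.
Proof. by rewrite ReMc /= mul0r subr0. Qed.

Lemma norm_cplx_le (u v : R) : Re `|(u +i* v) : C| <= `|u| + `|v|.
Proof.
rewrite normc_def /=.
have h0 : 0 <= `|u| + `|v| by apply: addr_ge0.
have h : u ^+ 2 + v ^+ 2 <= (`|u| + `|v|) ^+ 2.
  rewrite sqrrD (real_normK (num_real u)) (real_normK (num_real v)).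
  rewrite -addrA lerD2l lerDr.
  by apply: mulrn_wge0; apply: mulr_ge0.
have := ler_wsqrtr h; rewrite sqrtr_sqr ger0_norm //.
Qed.
Lemma Re_norm_real (r : R) : 0 <= r -> Re `|r%:C| = r.
Proof. by move=> r0; rewrite ger0_norm ?ler0c. Qed.

End Cplx.
Section Ext.
Variables (R : realType) (A : completeNormedModType R[i]) (mul : A -> A -> A)
  (I : set A).
Local Notation C := R[i].
Local Open Scope complex_scope.
Local Notation tens := (tensor C A).
Variable lam : C.
Hypothesis lam1 : 1 <= lam.
Hypothesis hlam : forall z, in_tensor setT I z ->
    forall t, in_tensor setT setT t -> tensor_eq setT t z ->
    forall eps : C, 0 < eps ->
    exists u, [/\ in_tensor setT I u, tensor_eq I u z &
                  tcost u <= lam * tcost t + eps].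
Variable D : A -> A -> C.
Variable cn : R.
Hypothesis cn0 : 0 <= cn.
Hypothesis hDb : forall a x, I x -> `|D a x| <= cn%:C * `|a| * `|x|.
Hypothesis hDl1 : forall a (k : C) x y, I x -> I y ->
  D a (k *: x + y) = k * D a x + D a y.
Hypothesis hDl2 : forall (k : C) a b x, I x -> D (k *: a + b) x = k * D a x + D b x.

Definition Bil := {B : A -> A -> C | bilinear_on setT B}.

Definition phi (t : tens) : Bil -> R := fun B => Re (teval (sval B) t).

Lemma bil_scale (k : C) (B : A -> A -> C) : bilinear_on setT B ->
  bilinear_on setT (fun b c => k * B b c).
Proof.
move=> [h1 h2]; split => [k' x y z _|k' x y z _ _].
  by rewrite h1 // mulrDr mulrCA.
by rewrite h2 // mulrDr mulrCA.
Qed.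

Definition iB (B : Bil) : Bil :=
  exist _ (fun b c => 'i * sval B b c) (bil_scale 'i (svalP B)).

Lemma teval_mulc (k : C) (B : A -> A -> C) (t : tens) : teval (fun b c => k * B b c) t = k * teval B t.
Proof. by rewrite /teval mulr_sumr. Qed.

Lemma phi_teval (t s : tens) : phi t = phi s ->
  forall B, bilinear_on setT B -> teval B t = teval B s.
Proof.
move=> e B hB.
have e1 := congr1 (fun f => f (exist _ B hB)) e.
have e2 := congr1 (fun f => f (iB (exist _ B hB))) e.
move: e1 e2; rewrite /phi /= !teval_mulc !ReMc /= !mul0r !mul1r !sub0r => e1 e2.
by apply: cext => //; apply: oppr_inj.
Qed.

Lemma phi_cat t s : phi (tcat t s) = phi t + phi s.
Proof. by apply: funext => B; rewrite /phi teval_cat ReD. Qed.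

Lemma phi_scale k t : phi (tscale k t) = fun B => Re (k * teval (sval B) t).
Proof.
apply: funext => B; rewrite /phi (@teval_scale _ _ setT) //.
by move=> k' x y z _; rewrite (proj1 (svalP B)).
Qed.

Lemma fappZ (f g : Bil -> R) (r s : R) B : (r *: f + s *: g) B = r * f B + s * g B.
Proof. by []. Qed.
Lemma fappD (f g : Bil -> R) B : (f + g) B = f B + g B.
Proof. by []. Qed.
Lemma fappZ1 (f : Bil -> R) (r : R) B : (r *: f) B = r * f B.
Proof. by []. Qed.

Lemma phi_scale_lin k t :
  phi (tscale k t) = Re k *: phi t + Im k *: phi (tscale 'i t).
Proof.
rewrite !phi_scale; apply: funext => B; rewrite fappZ.
rewrite !ReMc /= mul0r mul1r sub0r; lra.
Qed.

Lemma phi_scale_real (r : R) t : phi (tscale r%:C t) = r *: phi t.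
Proof. by rewrite phi_scale_lin /= scale0r addr0. Qed.

Lemma phi_scale2 k k' t : phi (tscale k (tscale k' t)) = phi (tscale (k * k') t).
Proof.
rewrite !phi_scale; apply: funext => B /=.
rewrite (@teval_scale _ _ setT) ?mulrA //.
by move=> k'' x y z _; rewrite (proj1 (svalP B)).
Qed.

Lemma phi_empty : phi (tempty A) = 0.
Proof. by apply: funext => B; rewrite /phi teval_empty. Qed.

Definition T := [set x : Bil -> R | exists t, x = phi t].

Lemma TD x y : T x -> T y -> T (x + y).
Proof. by move=> [t ->] [s ->]; exists (tcat t s); rewrite phi_cat. Qed.

Lemma TZ (r : R) x : T x -> T (r *: x).
Proof. by move=> [t ->]; exists (tscale r%:C t); rewrite phi_scale_real. Qed.

Let l := Re lam.
Let lam_real : lam = l%:C.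
Proof. by apply: ge0_real; apply: le_trans lam1. Qed.
Let l1 : 1 <= l.
Proof. by have := leC_Re lam1. Qed.

Let bilDI : bilinear_on I D.
Proof. by split => [k x y z Iz|k x y z Iy Iz]; [apply: hDl2|apply: hDl1]. Qed.

Definition rc (t : tens) := Re (tcost t).
Lemma rc_real t : tcost t = (rc t)%:C.
Proof. exact: ge0_real (tcost_ge0 t). Qed.
Lemma rc_ge0 t : 0 <= rc t.
Proof. exact: leC_Re (tcost_ge0 t). Qed.
Lemma rc_cat t s : rc (tcat t s) = rc t + rc s.
Proof. by rewrite /rc tcost_cat ReD. Qed.
Lemma rc_scale k t : rc (tscale k t) = Re `|k| * rc t.
Proof. by rewrite /rc tcost_scale {1}norm_real Re_rmul. Qed.

Lemma Re_bound u : in_tensor setT I u -> Re (teval D u) <= cn * rc u.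
Proof.
move=> hu.
have h : `|teval D u| <= cn%:C * tcost u.
  rewrite /teval /tcost mulr_sumr; apply: le_trans (ler_norm_sum _ _ _) _.
  by apply: ler_sum => j _; rewrite mulrA; apply: hDb; case: (hu j).
apply: le_trans (Re_le_norm _) _.
by have := leC_Re h; rewrite Re_rmul.
Qed.

Lemma KB z t : in_tensor setT I z -> tensor_eq setT t z ->
  Re (teval D z) <= cn * l * rc t.
Proof.
move=> hz hzt; apply/ler_addgt0Pr => e e0.
have cn1 : 0 < cn + 1 by apply: ltr_wpDl cn0 ltr01.
set e1 := e / (cn + 1).
have e10 : 0 < e1 by apply: divr_gt0.
have e1C : 0 < e1%:C.
  by have : (0 : R)%:C < e1%:C by rewrite ltcR.
have [u [hu hue hc]] := hlam hz (t := t) (fun j => conj Logic.I Logic.I) hzt e1C.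
rewrite -(hue D bilDI); apply: le_trans (Re_bound hu) _.
have hc' : rc u <= l * rc t + e1.
  by move: (leC_Re hc); rewrite lam_real rc_real ReD Re_rmul !Rer.
have : cn * rc u <= cn * (l * rc t + e1) by apply: ler_wpM2l.
have : cn * e1 <= e.
  rewrite /e1 mulrA ler_pdivrMr //; nra.
rewrite mulrDr mulrA; lra.
Qed.

Definition S x := [set e | exists t, phi t = x /\ e = rc t].
Lemma S_ne x : T x -> S x !=set0.
Proof. by move=> [t ->]; exists (rc t), t. Qed.
Lemma S_lb x : has_lbound (S x).
Proof. by exists 0 => _ [t [_ ->]]; apply: rc_ge0. Qed.
Lemma S_inf x : T x -> has_inf (S x).
Proof. by move=> Tx; split; [apply: S_ne|apply: S_lb]. Qed.
Lemma inf_le x t : phi t = x -> inf (S x) <= rc t.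
Proof. by move=> e; apply: ge_inf; [apply: S_lb|exists t]. Qed.
Lemma inf_ge0 x : T x -> 0 <= inf (S x).
Proof. by move=> Tx; apply: lb_le_inf; [apply: S_ne|move=> _ [t [_ ->]]; apply: rc_ge0]. Qed.

Let lamR := cn * l + 1.
Let lamR0 : 0 < lamR.
Proof. by apply: ltr_wpDl ltr01; apply: mulr_ge0 => //; apply: le_trans l1. Qed.

Definition p x := lamR * inf (S x).

Lemma infD x y : T x -> T y -> inf (S (x + y)) <= inf (S x) + inf (S y).
Proof.
move=> Tx Ty; apply/ler_addgt0Pr => e e0.
have e2 : 0 < e / 2 by apply: divr_gt0.
have [_ [t [ht ->]] lt1] := inf_adherent e2 (S_inf Tx).
have [_ [s [hs ->]] lt2] := inf_adherent e2 (S_inf Ty).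
have : inf (S (x + y)) <= rc (tcat t s).
  by apply: inf_le; rewrite phi_cat ht hs.
rewrite rc_cat; have : e / 2 + e / 2 = e by rewrite -splitr.
lra.
Qed.

Lemma infZ_le (r : R) x : 0 < r -> T x -> inf (S (r *: x)) <= r * inf (S x).
Proof.
move=> r0 Tx.
suff h : r^-1 * inf (S (r *: x)) <= inf (S x).
  by have := ler_pM2l r0 (r^-1 * inf (S (r *: x))) (inf (S x));
     rewrite mulrA mulfV ?gt_eqF // mul1r h => ->.
apply: lb_le_inf; first exact: S_ne.
move=> _ [t [ht ->]].
have : inf (S (r *: x)) <= rc (tscale r%:C t).
  by apply: inf_le; rewrite phi_scale_real ht.
rewrite rc_scale Re_norm_real; last exact: ltW.
move=> h.
by rewrite ler_pdivrMl.
Qed.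

Lemma infZ (r : R) x : 0 < r -> T x -> inf (S (r *: x)) = r * inf (S x).
Proof.
move=> r0 Tx; apply: le_anti; rewrite infZ_le //=.
have ri0 : 0 < r^-1 by rewrite invr_gt0.
have := infZ_le ri0 (TZ r Tx); rewrite scalerA mulVf ?gt_eqF // scale1r => h.
by rewrite -ler_pdivlMl // mulrC.
Qed.

Lemma pD x y : T x -> T y -> p (x + y) <= p x + p y.
Proof. by move=> Tx Ty; rewrite /p -mulrDr; apply: ler_wpM2l; [exact: ltW|exact: infD]. Qed.

Lemma pZ (r : R) x : 0 < r -> T x -> p (r *: x) = r * p x.
Proof. by move=> r0 Tx; rewrite /p infZ // mulrCA. Qed.

Definition Gam := [set xy : (Bil -> R) * R | exists z,
  in_tensor setT I z /\ xy = (phi z, Re (teval D z))].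

Lemma in_tensor_scale k (z : tens) : in_tensor setT I z -> in_tensor setT I (tscale k z).
Proof. by move=> hz j; split => //; case: (hz j). Qed.

Lemma tevalD_scale k z : in_tensor setT I z -> teval D (tscale k z) = k * teval D z.
Proof.
move=> hz; apply: (@teval_scale _ _ I) => [k' x y w Iw|j]; first exact: hDl2.
by case: (hz j).
Qed.

Lemma G0 : Gam (0, 0).
Proof.
exists (tempty A); split; first by move=> j; have := ltn_ord j.
by rewrite phi_empty teval_empty.
Qed.

Lemma Gfun x y y' : Gam (x, y) -> Gam (x, y') -> y = y'.
Proof.
move=> [z [hz [-> ->]]] [z' [hz' [ex' ->]]].
have hw : forall z z', in_tensor setT I z -> in_tensor setT I z' -> phi z = phi z' ->
    Re (teval D z) - Re (teval D z') <= 0.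
  move=> z1 z2 h1 h2 e.
  set w := tcat z1 (tscale (-1) z2).
  have hw : in_tensor setT I w by apply: in_tensor_cat => //; apply: in_tensor_scale.
  have := @KB w (tempty A) hw.
  rewrite /rc tcost_empty Re0 mulr0 teval_cat tevalD_scale // ReD mulN1r ReN.
  apply => B hB.
  rewrite teval_empty teval_cat (@teval_scale _ _ setT) ?(phi_teval e) //.
    by rewrite mulN1r subrr.
  by move=> k0 x0 y0 w' _; rewrite (proj1 hB).
have := hw _ _ hz hz' ex'; have := hw _ _ hz' hz (esym ex'); lra.
Qed.

Lemma GD x y x' y' : Gam (x, y) -> Gam (x', y') -> Gam (x + x', y + y').
Proof.
move=> [z [hz [-> ->]]] [z' [hz' [-> ->]]].
exists (tcat z z'); split; first exact: in_tensor_cat.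
by rewrite phi_cat teval_cat ReD.
Qed.

Lemma GZ (r : R) x y : Gam (x, y) -> Gam (r *: x, r * y).
Proof.
move=> [z [hz [-> ->]]].
exists (tscale r%:C z); split; first exact: in_tensor_scale.
by rewrite phi_scale_real tevalD_scale // Re_rmul.
Qed.

Lemma Gp x y : Gam (x, y) -> T x /\ y <= p x.
Proof.
move=> [z [hz [-> ->]]]; split; first by exists z.
rewrite /p -ler_pdivrMl //.
apply: lb_le_inf; first by apply: S_ne; exists z.
move=> _ [t [ht ->]].
rewrite ler_pdivrMl //.
have := @KB z t hz (fun B hB => phi_teval ht hB).
have : cn * l * rc t <= lamR * rc t.
  by rewrite /lamR mulrDl mul1r lerDl rc_ge0.
lra.
Qed.

Lemma norm_i : Re `|'i : C| = 1.
Proof. by rewrite normc_def /= expr0n expr1n add0r sqrtr1. Qed.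

Lemma ext_exists : exists P : A -> A -> C,
  bounded_bilinear P /\ forall b j, I j -> P b j = D b j.
Proof.
have [U [UD UZ Up UG]] : exists U : (Bil -> R) -> R,
  [/\ forall x y, T x -> T y -> U (x + y) = U x + U y,
      forall (r : R) x, T x -> U (r *: x) = r * U x,
      forall x, T x -> U x <= p x &
      forall x y, Gam (x, y) -> U x = y].
  by apply: hahn_banach_real; [exact: TD|exact: TZ|exact: pD|exact: pZ
    |exact: G0|exact: Gfun|exact: GD|exact: GZ|exact: Gp].
have Tphi t : T (phi t) by exists t.
pose Gt t := (U (phi t) +i* - U (phi (tscale 'i t))).
have U_scale k t : U (phi (tscale k t)) = Re k * U (phi t) + Im k * U (phi (tscale 'i t)).
  rewrite phi_scale_lin UD; [|exact: TZ|exact: TZ].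
  by rewrite !UZ.
have Gt_scale k t : Gt (tscale k t) = k * Gt t.
  apply: cext.
    rewrite /Gt /= U_scale ReMc /=; lra.
  rewrite /Gt /= phi_scale2 U_scale ReMc !ImMc /= !mul0r !mul1r; lra.
have phi_i_cat t s : phi (tscale 'i (tcat t s)) = phi (tscale 'i t) + phi (tscale 'i s).
  rewrite !phi_scale; apply: funext => B; rewrite fappD teval_cat mulrDr ReD //.
have Gt_cat t s : Gt (tcat t s) = Gt t + Gt s.
  apply: cext; rewrite /Gt /=.
    by rewrite phi_cat UD.
  by rewrite phi_i_cat UD // opprD.
have Gt_eq t s : phi t = phi s -> Gt t = Gt s.
  move=> e; rewrite /Gt e.
  have -> // : phi (tscale 'i t) = phi (tscale 'i s).
  by rewrite !phi_scale; apply: funext => B; rewrite (phi_teval e (svalP B)).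
exists (fun b c => Gt (tsingle b c)); split; first split.
- split.
  + move=> k x y z _; rewrite -Gt_scale -Gt_cat; apply: Gt_eq.
    apply: funext => B; rewrite /phi teval_cat (@teval_scale _ _ setT) ?teval_single.
    * by rewrite (proj1 (svalP B)).
    * by move=> k' x' y' z' _; rewrite (proj1 (svalP B)).
    * by [].
  + move=> k x y z _ _; rewrite -Gt_scale -Gt_cat; apply: Gt_eq.
    apply: funext => B; rewrite /phi teval_cat (@teval_scale _ _ setT) ?teval_single.
    * by rewrite (proj2 (svalP B)).
    * by move=> k' x' y' z' _; rewrite (proj1 (svalP B)).
    * by [].
- exists ((2 * lamR)%:C) => b c.
  set s := tsingle b c.
  have Ub k : U (phi (tscale k s)) <= lamR * (Re `|k| * rc s).
    apply: le_trans (Up _ (Tphi _)) _.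
    rewrite /p; apply: ler_wpM2l; first exact: ltW.
    by rewrite -rc_scale; apply: inf_le.
  have M0 : 0 <= lamR * rc s by apply: mulr_ge0; [exact: ltW|exact: rc_ge0].
  have hu : `|U (phi s)| <= lamR * rc s.
    rewrite ler_norml; apply/andP; split.
      have := Ub (-1); rewrite U_scale normrN normr1 Re1 mul1r ReN Re1 ImN Im1.
      lra.
    by have := Ub 1; rewrite U_scale normr1 Re1 Im1 mul1r; lra.
  have hv : `|U (phi (tscale 'i s))| <= lamR * rc s.
    rewrite ler_norml; apply/andP; split.
      have := Ub (-'i); rewrite U_scale normrN norm_i mul1r ReN ImN /=.
      lra.
    by have := Ub 'i; rewrite U_scale norm_i mul1r /=; lra.
  rewrite (norm_real (Gt s)) -mulrA -tcost_single -/s rc_real -rcM lecR.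
  apply: le_trans (norm_cplx_le _ _) _; rewrite normrN; lra.
- move=> b j Ij.
  have hs : in_tensor setT I (tsingle b j) by [].
  have h1 := UG _ _ (ex_intro _ _ (conj hs erefl)).
  have h2 := UG _ _ (ex_intro _ _ (conj (in_tensor_scale (k:='i) hs) erefl)).
  rewrite /Gt h1 h2 tevalD_scale // !teval_single ReMc /= mul0r mul1r sub0r opprK.
  exact: ReIm_eta.
Qed.

End Ext.
Section Main.
Variables (R : realType) (A : completeNormedModType R[i]) (mul : A -> A -> A)
  (I : set A).
Local Notation C := R[i].
Local Open Scope complex_scope.
Hypothesis hBA : banach_algebra mul.
Hypothesis hI : closed_ideal mul I.

Lemma le_normM (u M v : C) : 0 <= v -> `|u| <= M * v -> `|u| <= `|M| * v.
Proof.
move=> v0 h; have h0 : 0 <= M * v := le_trans (normr_ge0 _) h.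
by rewrite -(ger0_norm v0) -normrM ger0_norm.
Qed.

Lemma bb_norm (B : A -> A -> C) : bounded_bilinear B ->
  exists M : C, 0 <= M /\ forall b c, `|B b c| <= M * `|b| * `|c|.
Proof.
move=> [_ [M hM]]; exists `|M|; split => // b c.
rewrite -mulrA; apply: le_normM; first by apply: mulr_ge0.
by rewrite mulrA.
Qed.

Lemma bb_r a (B : A -> A -> C) : bounded_bilinear B ->
  bounded_bilinear (fun b c => B b (mul c a)).
Proof.
move=> hB; have [M [M0 hM]] := bb_norm hB; have [[h1 h2] _] := hB.
split; first split.
- by move=> k x y z _; rewrite h1.
- by move=> k x y z _ _; rewrite (ba_mulDl hBA) (ba_mulZl hBA) h2.
- exists (M * `|a|) => b c; apply: le_trans (hM _ _) _.
  rewrite -!mulrA; apply: ler_wpM2l => //; rewrite mulrCA; apply: ler_wpM2l => //.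
  by rewrite mulrC; apply: (ba_norm_mul hBA).
Qed.

Lemma bb_l a (B : A -> A -> C) : bounded_bilinear B ->
  bounded_bilinear (fun b c => B (mul a b) c).
Proof.
move=> hB; have [M [M0 hM]] := bb_norm hB; have [[h1 h2] _] := hB.
split; first split.
- by move=> k x y z _; rewrite (ba_mulDr hBA) (ba_mulZr hBA) h1.
- by move=> k x y z _ _; rewrite h2.
- exists (M * `|a|) => b c; apply: le_trans (hM _ _) _.
  apply: ler_wpM2r => //; rewrite -mulrA; apply: ler_wpM2l => //.
  exact: (ba_norm_mul hBA).
Qed.

Lemma bb_lin (k : C) (B1 B2 : A -> A -> C) : bounded_bilinear B1 ->
  bounded_bilinear B2 -> bounded_bilinear (fun b c => k * B1 b c + B2 b c).
Proof.
move=> hB1 hB2; have [M1 [M10 hM1]] := bb_norm hB1; have [M2 [M20 hM2]] := bb_norm hB2.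
have [[h1 h2] _] := hB1; have [[h1' h2'] _] := hB2.
split; first split.
- move=> k' x y z _; rewrite h1 // h1' //.
  by rewrite mulrDr mulrCA !addrA (addrAC (k' * (k * _))) mulrDr.
- move=> k' x y z _ _; rewrite h2 // h2' //.
  by rewrite mulrDr mulrCA !addrA (addrAC (k' * (k * _))) mulrDr.
- exists (`|k| * M1 + M2) => b c; apply: le_trans (ler_normD _ _) _.
  rewrite !mulrDl; apply: lerD => //.
  by rewrite normrM -!mulrA; apply: ler_wpM2l => //; rewrite !mulrA.
Qed.

Definition lin_on (d : A -> C) :=
  forall (k : C) x y, I x -> I y -> d (k *: x + y) = k * d x + d y.

Lemma lin0 d : lin_on d -> d 0 = 0.
Proof.
move=> hd; have := hd 1 0 0 (ci_0 hI) (ci_0 hI).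
rewrite scale1r addr0 mul1r => h.
by apply: (addrI (d 0)); rewrite addr0 -h.
Qed.

Lemma span_zero d : lin_on d -> (forall y j, I j -> d (mul y j) = 0) ->
  forall s, span_products mul I s -> I s /\ d s = 0.
Proof.
move=> hd hprod s [n [k [a [i [hi ->]]]]].
apply: (big_ind (fun w => I w /\ d w = 0)).
- by split; [exact: ci_0 hI|exact: lin0].
- move=> x y [Ix dx] [Iy dy]; split; first exact: (ci_D hI).
  by have := hd 1 x y Ix Iy; rewrite scale1r mul1r dx dy addr0.
- move=> j _; have Ij : I (mul (a j) (i j)) by apply: (ci_mull hI).
  split; first exact: (ci_Z hI).
  have := hd (k j) _ 0 Ij (ci_0 hI); rewrite addr0 hprod // (lin0 hd) mulr0 addr0.
  by [].
Qed.

Lemma span_in_I s : span_products mul I s -> I s.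
Proof.
move=> [n [k [a [i [hi ->]]]]].
apply: (big_ind I); [exact: (ci_0 hI)|exact: (ci_D hI)|].
by move=> j _; apply: (ci_Z hI); apply: (ci_mull hI).
Qed.

Lemma closure_zero d (M : R) : 0 <= M -> lin_on d ->
  (forall x, I x -> `|d x| <= M%:C * `|x|) ->
  (forall s, span_products mul I s -> d s = 0) ->
  forall x, I x -> closure (span_products mul I) x -> d x = 0.
Proof.
move=> M0 hd hb hs x Ix hcl.
apply/eqP; rewrite -normr_eq0; apply/eqP.
rewrite (norm_real (d x)); congr (_%:C).
apply: le_anti; rewrite Re_norm_ge0 andbT.
apply/ler_addgt0Pr => e e0; rewrite add0r.
have M1 : 0 < M + 1 by apply: ltr_wpDl M0 ltr01.
set de := e / (M + 1).
have de0 : 0 < de by apply: divr_gt0.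
have deC : 0 < de%:C by have : (0 : R)%:C < de%:C by rewrite ltcR.
have [s [Ss Bs]] := hcl _ (nbhsx_ballx x _ deC).
have Is : I s by apply: span_in_I.
move: Bs; rewrite -ball_normE /= => Bs.
have Ixs : I (x - s) by apply: (ci_D hI) => //; rewrite -scaleN1r; apply: (ci_Z hI).
have e1 : d x = d (x - s).
  have := hd 1 (x - s) s Ixs Is; rewrite scale1r mul1r subrK (hs s Ss) addr0.
  by [].
rewrite e1.
have h := hb _ Ixs.
have h2 : `|d (x - s)| <= M%:C * de%:C.
  apply: le_trans h _; apply: ler_wpM2l; first by rewrite ler0c.
  exact: ltW.
move: (leC_Re h2); rewrite -rcM Rer => h3; apply: le_trans h3 _.
rewrite /de mulrA ler_pdivrMr //; nra.
Qed.

End Main.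
Unset Implicit Arguments.
Local Open Scope complex_scope.
Theorem theorem4p1 (R : realType) (A : completeNormedModType R[i])
    (mul : A -> A -> A) (I : set A) :
  banach_algebra mul -> biflat mul -> closed_ideal mul I ->
  left_essential mul I -> respects_iso I ->
  H1_dual_trivial mul I.
Proof.
move=> hBA [rho [rho_bd rho_lin _ rho_id rho_mod]] hI hle [lam [lam1 hlam]].
move=> D [hDl1 hDl2 [CD hCD] hDder].
pose cn := Re `|CD|.
have cn0 : 0 <= cn := Re_norm_ge0 CD.
have hDb : forall a x, I x -> `|D a x| <= cn%:C * `|a| * `|x|.
  move=> a x Ix; rewrite /cn -norm_real -mulrA; apply: le_normM.
    by apply: mulr_ge0.
  by rewrite mulrA; apply: hCD.
have [P [hP hPD]] := ext_exists lam1 hlam cn0 hDb hDl1 hDl2.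
have [Plin [MP hMP]] := rho_bd P hP.
exists (fun x => - rho P x); split.
  split; first by move=> k x y _ _; rewrite Plin opprD mulrN.
  by exists MP => x _; rewrite normrN; apply: hMP.
move=> a x Ix.
have hPr := bb_r hBA a hP.
have hPl := bb_l hBA a hP.
have hH := bb_lin (-1) hPr hPl.
have eH := rho_lin (-1) _ _ hPr hPl.
have [eR eL] := rho_mod a P hP.
set H := (fun b c => -1 * P b (mul c a) + P (mul a b) c) in hH eH.
have key : forall y, rho H y = - rho P (mul y a) + rho P (mul a y).
  by move=> y; rewrite eH eR eL mulN1r.
rewrite opprK -key.
have [Hlin [MH hMH]] := rho_bd H hH.
pose d := fun y => D a y - rho H y.
have dlin : lin_on I d.
  move=> k y z Iy Iz; rewrite /d hDl1 // Hlin.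
  by rewrite mulrBr opprD !addrA (addrAC (k * D a y)).
have dprod : forall y j, I j -> d (mul y j) = 0.
  move=> y j Ij; rewrite /d.
  have [eRj _] := rho_mod j H hH.
  have -> : rho H (mul y j) = rho (fun b c => H b (mul c j)) y by rewrite eRj.
  pose g := fun w => D a (mul w j).
  have -> : (fun b c => H b (mul c j)) = (fun b c => g (mul b c)).
    apply: funext => b; apply: funext => c; rewrite /H /g.
    have Icj : I (mul c j) by apply: (ci_mull hI).
    have Icja : I (mul (mul c j) a) by apply: (ci_mulr hI).
    rewrite !hPD // hDder // mulN1r addrA addNr add0r.
    by rewrite (ba_mulA hBA).
  have hg : bounded_functional g.
    split.
      move=> k w w'; rewrite /g (ba_mulDl hBA) (ba_mulZl hBA) hDl1 //.
        by apply: (ci_mull hI).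
      by apply: (ci_mull hI).
    exists (cn%:C * `|a| * `|j|) => w; rewrite /g.
    apply: le_trans (hDb _ _ ((ci_mull hI) w j Ij)) _.
    rewrite -!mulrA; apply: ler_wpM2l; first by rewrite ler0c.
    apply: ler_wpM2l => //; rewrite mulrC; exact: (ba_norm_mul hBA).
  by rewrite rho_id // /g subrr.
have dspan : forall s, span_products mul I s -> d s = 0.
  by move=> s Ss; have [] := span_zero hI dlin dprod Ss.
pose M := cn * Re `|a| + Re `|MH|.
have M0 : 0 <= M.
  apply: addr_ge0; last exact: Re_norm_ge0.
  by apply: mulr_ge0 => //; apply: leC_Re (normr_ge0 a).
have dbound : forall y, I y -> `|d y| <= M%:C * `|y|.
  move=> y Iy; rewrite /d; apply: le_trans (ler_normB _ _) _.
  rewrite /M rcD rcM -(ge0_real (normr_ge0 a)) -norm_real mulrDl.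
  apply: lerD; first exact: hDb.
  by apply: le_normM => //; apply: hMH.
have := closure_zero hI M0 dlin dbound dspan Ix (hle x Ix).
by rewrite /d => /eqP; rewrite subr_eq0 => /eqP.
Qed.
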